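(* Let $\mathcal M=(S,A,P)$ be an MDP, $T\subseteq S$ a set of sink target states, $\mathcal M'$ the pruned MDP and $s_0\in S'$. For every strategy $\sigma\in\Sigma_{\mathcal M,s_0}(\Diamond T)$, $$\mathbb E'_{\sigma,s_0}(\mathrm{len}_T)=\mathbb E_{\sigma,s_0}(\mathrm{len}_T\mid\Diamond T).$$
   Context: An MDP is $\mathcal M=(S,A,P)$ with $S,A$ finite and $P$ a partial map $S\times A\to\mathrm{Dist}(S)$; $a$ is legal at $s$ if $P(s,a)$ is defined; $P(s,a,s')=P(s,a)(s')$. A strategy maps finite paths to distributions over legal actions at the last state (history-dependent, randomized). $\Pr_{\sigma,s}$, $\mathbb E_{\sigma,s}$ are the induced probability measure and expectation on infinite paths from $s$. States of $T$ are sinks; $\Diamond T$ is the event of visiting $T$; $\mathrm{Val}(s)=\max_\sigma\Pr_{\sigma,s}(\Diamond T)$; $\Sigma_{\mathcal M,s}(\Diamond T)$ is the set of strategies with $\Pr_{\sigma,s}(\Diamond T)=\mathrm{Val}(s)$. For an infinite path $\rho$, $\mathrm{len}_T(\rho)$ is the least $i$ with $\rho[i]\in T$ (the $(i+1)$-th state). $\mathbb E_{\sigma,s}(\mathrm{len}_T\mid\Diamond T)=\sum_{r\ge0}r\cdot\Pr_{\sigma,s}(\Diamond T\wedge \mathrm{len}_T=r)/\Pr_{\sigma,s}(\Diamond T)$. $\mathrm{Opt}_{\mathcal M}=\{(s,a): a\text{ legal at }s,\ \mathrm{Val}(s)=\sum_{s'}P(s,a,s')\mathrm{Val}(s')\}$;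 $\Sigma^{\mathrm{Opt}}_{\mathcal M}$ is the set of strategies that, after every finite path $\rho$, only give positive probability to actions $a$ with $(\mathrm{last}(\rho),a)\in\mathrm{Opt}_{\mathcal M}$; every strategy in $\Sigma_{\mathcal M,s}(\Diamond T)$ lies in $\Sigma^{\mathrm{Opt}}_{\mathcal M}$. The pruned MDP $\mathcal M'=(S',A,P')$ has $S'=\{s:\mathrm{Val}(s)>0\}$ and $P'(s,a,s')=P(s,a,s')\mathrm{Val}(s')/\mathrm{Val}(s)$ if $s\in S'$ and $(s,a)\in\mathrm{Opt}_{\mathcal M}$ (undefined otherwise). Strategies in $\Sigma^{\mathrm{Opt}}_{\mathcal M}$ are identified with strategies of $\mathcal M'$ by restriction to finite paths of $\mathcal M'$; $\mathbb E'_{\sigma,s}$ is the expectation in $\mathcal M'$. *)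

(* Defs.v *)
From HB Require Import structures.
From mathcomp Require Import all_boot all_order all_algebra.
From mathcomp Require Import all_classical all_reals all_analysis.
Set Implicit Arguments. Unset Strict Implicit. Unset Printing Implicit Defensive.
Import Order.TTheory GRing.Theory Num.Theory.
Local Open Scope ring_scope.

Section MDP.
Variables (R : realType) (S A : finType).

(* An MDP (S, A, P): [legal s a] says P(s,a) is defined; then P s a is a
   distribution on S.  Values of P s a for illegal a are irrelevant. *)
Definition is_dist (f : S -> R) : Prop :=
  (forall s, 0 <= f s) /\ \sum_(s : S) f s = 1.

Definition is_mdp (legal : S -> A -> bool) (P : S -> A -> S -> R) : Prop :=
  forall s a, legal s a -> is_dist (P s a).

(* A finite path s0 a0 s1 ... an-1 sn is (s0, [:: (a0,s1); ...; (an-1,sn)]). *)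
Definition last_state (s0 : S) (h : seq (A * S)) : S := last s0 (map snd h).

Definition strat := S -> seq (A * S) -> A -> R.

Definition is_strategy (legal : S -> A -> bool) (sigma : strat) : Prop :=
  forall s0 h, [/\ (forall a, 0 <= sigma s0 h a),
                   \sum_(a : A) sigma s0 h a = 1 &
                   (forall a, 0 < sigma s0 h a -> legal (last_state s0 h) a)].

(* Probability of the cylinder of the finite path (s0, h ++ rest) given that
   the prefix h has already been performed: product of
   sigma(prefix)(a) * P(last, a, s'). *)
Fixpoint pprob (P : S -> A -> S -> R) (sigma : strat) (s0 : S)
  (h rest : seq (A * S)) : R :=
  match rest with
  | [::] => 1
  | (a, s') :: rest' =>
      sigma s0 h a * P (last_state s0 h) a s' *
      pprob P sigma s0 (rcons h (a, s')) rest'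
  end.

Definition first_hit (T : {set S}) (s0 : S) (w : seq (A * S)) : bool :=
  (last_state s0 w \in T) && all (fun x => x \notin T) (belast s0 (map snd w)).

(* Pr_{sigma,s0}(<>T /\ len_T = r) *)
Definition pr_len (P : S -> A -> S -> R) (T : {set S}) (sigma : strat)
  (s0 : S) (r : nat) : R :=
  \sum_(w : r.-tuple (A * S) | first_hit T s0 w) pprob P sigma s0 [::] w.

Definition pr_reach (P : S -> A -> S -> R) (T : {set S}) (sigma : strat)
  (s0 : S) : \bar R :=
  (\sum_(0 <= r <oo) (pr_len P T sigma s0 r)%:E)%E.

Definition ValE (legal : S -> A -> bool) (P : S -> A -> S -> R)
  (T : {set S}) (s : S) : \bar R :=
  ereal_sup [set pr_reach P T sigma s | sigma in [set sigma | is_strategy legal sigma]].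

Definition Val (legal : S -> A -> bool) (P : S -> A -> S -> R) (T : {set S}) (s : S) : R := fine (ValE legal P T s).

Definition optimal (legal : S -> A -> bool) (P : S -> A -> S -> R) (T : {set S}) (sigma : strat) (s : S) : Prop :=
  is_strategy legal sigma /\ pr_reach P T sigma s = ValE legal P T s.

Definition Opt (legal : S -> A -> bool) (P : S -> A -> S -> R) (T : {set S}) (s : S) (a : A) : Prop :=
  legal s a /\ Val legal P T s = \sum_(s' : S) P s a s' * Val legal P T s'.

(* Pruned MDP M': transition probabilities P' (0 where undefined); states
   outside S' = {s | Val s > 0} have no legal action in M'. *)
Definition legal' (legal : S -> A -> bool) (P : S -> A -> S -> R) (T : {set S}) (s : S) (a : A) : bool :=
  (0 < Val legal P T s) && `[< Opt legal P T s a >].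

Definition P' (legal : S -> A -> bool) (P : S -> A -> S -> R) (T : {set S}) (s : S) (a : A) (s' : S) : R :=
  if legal' legal P T s a
  then P s a s' * Val legal P T s' / Val legal P T s else 0.

(* E'_{sigma,s0}(len_T) in M': len_T = +oo on paths not reaching T. *)
Definition exp_len' (legal : S -> A -> bool) (P : S -> A -> S -> R) (T : {set S}) (sigma : strat) (s0 : S) : \bar R :=
  ((\sum_(0 <= r <oo) (r%:R * pr_len (P' legal P T) T sigma s0 r)%:E)
   + (if (pr_reach (P' legal P T) T sigma s0 < 1)%E then +oo else 0))%E.

Definition exp_len_cond (P : S -> A -> S -> R) (T : {set S}) (sigma : strat) (s0 : S) : \bar R :=
  ((\sum_(0 <= r <oo) (r%:R * pr_len P T sigma s0 r)%:E)
   * ((fine (pr_reach P T sigma s0))^-1)%:E)%E.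

End MDP.

(* Main.v *)
Require Import Defs.
From HB Require Import structures.
From mathcomp Require Import all_boot all_order all_algebra.
From mathcomp Require Import all_classical all_reals all_analysis.
From mathcomp Require Import lra ring.
Set Implicit Arguments. Unset Strict Implicit. Unset Printing Implicit Defensive.
Import Order.TTheory GRing.Theory Num.Theory.
Local Open Scope ring_scope.

Section Aux.
Variables (R : realType) (S A : finType).
Variables (legal : S -> A -> bool) (P : S -> A -> S -> R) (T : {set S}).
Hypothesis hmdp : is_mdp legal P.

Definition plen (sg : strat R S A) (x : S) (h : seq (A*S)) (r : nat) : R :=
  \sum_(w : r.-tuple (A * S) | first_hit T (last_state x h) w) pprob P sg x h w.

Lemma last_state_rcons (x : S) (h : seq (A*S)) a s : last_state x (rcons h (a,s)) = s.
Proof. by rewrite /last_state map_rcons last_rcons. Qed.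

Lemma last_state_cat (x : S) (h h' : seq (A*S)) : last_state x (h ++ h') = last_state (last_state x h) h'.
Proof. by rewrite /last_state map_cat last_cat. Qed.

Lemma first_hit_cons (x : S) (p : A*S) w : first_hit T x (p :: w) = (x \notin T) && first_hit T p.2 w.
Proof. by rewrite /first_hit /last_state /= andbCA. Qed.

Lemma first_hit_nil (x : S) : first_hit T x (@nil (A*S)) = (x \in T).
Proof. by rewrite /first_hit /= andbT. Qed.

Lemma sum_tuple_cons (X : finType) r (F : seq X -> R) :
  \sum_(w : r.+1.-tuple X) F w = \sum_(x : X) \sum_(w : r.-tuple X) F (x :: w).
Proof.
rewrite pair_big /=.
rewrite (reindex (fun p : X * r.-tuple X => cons_tuple p.1 p.2)) //=.
exists (fun w : r.+1.-tuple X => (thead w, behead_tuple w)).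
  by case=> x t _ /=; congr pair; apply/val_inj.
move=> w _; apply/val_inj => /=; case: w => -[|y l] //= _.
Qed.

Lemma step_ge0 (sg : strat R S A) x h a s : is_strategy legal sg -> 0 <= sg x h a * P (last_state x h) a s.
Proof.
move=> /(_ x h) [g0 _ gl]; have := g0 a; rewrite le0r => /orP [/eqP->|/gl lg].
  by rewrite mul0r.
by rewrite mulr_ge0 // (hmdp lg).1.
Qed.

Lemma pprob_ge0 (sg : strat R S A) x h w : is_strategy legal sg -> 0 <= pprob P sg x h w.
Proof.
move=> hs; elim: w h => [|[a s] w IH] h /=; first by [].
by rewrite mulr_ge0 // step_ge0.
Qed.

Lemma plen_ge0 sg x h r : is_strategy legal sg -> 0 <= plen sg x h r.
Proof. by move=> hs; apply: sumr_ge0 => w _; apply: pprob_ge0. Qed.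

Lemma plen0 sg x h : plen sg x h 0 = (last_state x h \in T)%:R.
Proof.
rewrite /plen big_mkcond (eq_bigl (pred1 [tuple])) => [|w]; last by apply/esym/eqP; rewrite [w]tuple0.
by rewrite big_pred1_eq /= first_hit_nil; case: ifP.
Qed.

Lemma plen_S sg x h r : plen sg x h r.+1 =
  (last_state x h \notin T)%:R * \sum_(a : A) \sum_(s : S)
     (sg x h a * P (last_state x h) a s * plen sg x (rcons h (a, s)) r).
Proof.
rewrite /plen big_mkcond /= (@sum_tuple_cons _ r (fun w : seq (A*S) => if first_hit T (last_state x h) w then pprob P sg x h w else 0)).
rewrite [RHS]big_distrr /=.
under [RHS]eq_bigr do rewrite big_distrr /=.
rewrite [RHS]pair_big /=.
apply: eq_bigr => -[a s] _ /=.
rewrite mulrA big_distrr /= [RHS]big_mkcond /=; apply: eq_bigr => w _.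
rewrite (first_hit_cons (last_state x h) (a,s)) last_state_rcons /=.
by case: (last_state x h \in T) => /=; [rewrite !mul0r; case: ifP | rewrite mul1r; case: ifP => _; rewrite ?mulr0].
Qed.

Lemma weights_sum (sg : strat R S A) x h : is_strategy legal sg ->
  \sum_(a : A) \sum_(s : S) sg x h a * P (last_state x h) a s = 1.
Proof.
move=> hs; have [g0 g1 gl] := hs x h.
rewrite -[RHS]g1; apply: eq_bigr => a _; rewrite -big_distrr /=.
have := g0 a; rewrite le0r => /orP [/eqP->|/gl lg]; first by rewrite mul0r.
by rewrite (hmdp lg).2 mulr1.
Qed.

Lemma psum_S sg x h N : \sum_(r < N.+1) plen sg x h r =
  (last_state x h \in T)%:R + (last_state x h \notin T)%:R *
  \sum_(a : A) \sum_(s : S) (sg x h a * P (last_state x h) a s *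
      \sum_(r < N) plen sg x (rcons h (a, s)) r).
Proof.
rewrite big_ord_recl plen0; congr (_ + _).
under eq_bigr do rewrite plen_S.
rewrite -big_distrr /=; congr (_ * _).
rewrite exchange_big /=; apply: eq_bigr => a _.
rewrite exchange_big /=; apply: eq_bigr => s _.
by rewrite big_distrr.
Qed.

Lemma psum_le1 sg x : is_strategy legal sg -> forall N h, \sum_(r < N) plen sg x h r <= 1.
Proof.
move=> hs; elim=> [|N IH] h; first by rewrite big_ord0.
rewrite psum_S.
have H : \sum_(a : A) \sum_(s : S) (sg x h a * P (last_state x h) a s *
      \sum_(r < N) plen sg x (rcons h (a, s)) r) <= 1.
  rewrite -(weights_sum x h hs); apply: ler_sum => a _; apply: ler_sum => s _.
  by rewrite -[leRHS]mulr1 ler_wpM2l ?step_ge0.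
by case: (last_state x h \in T) => /=; rewrite ?mul0r ?addr0 ?mul1r ?add0r.
Qed.

Local Open Scope ereal_scope.

Definition V sg x h := \sum_(0 <= r <oo) (plen sg x h r)%:E.

Lemma V_ge0 sg x h : is_strategy legal sg -> 0 <= V sg x h.
Proof. by move=> hs; apply: nneseries_ge0 => n _ _; rewrite lee_fin plen_ge0. Qed.

Lemma V_le1 sg x h : is_strategy legal sg -> V sg x h <= 1.
Proof.
move=> hs; apply: lime_le; first by apply: is_cvg_nneseries => n _ _; rewrite lee_fin plen_ge0.
apply: nearW => n /=; rewrite sumEFin lee_fin big_mkord.
exact: psum_le1.
Qed.

Lemma V_fin sg x h : is_strategy legal sg -> V sg x h = (fine (V sg x h))%:E.
Proof.
move=> hs; rewrite fineK // ge0_fin_numE ?V_ge0 //.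
by apply: (le_lt_trans (V_le1 x h hs)); rewrite ltry.
Qed.

Lemma V_T sg x h : last_state x h \in T -> V sg x h = 1.
Proof.
move=> hT.
have f0 : forall k, plen sg x h k = (k == 0)%N%:R.
  by case=> [|k]; rewrite ?plen0 ?plen_S hT /= ?mul0r.
rewrite /V nneseries_recl //; last by move=> k _; rewrite f0 lee_fin ler0n.
rewrite f0 /= eseries0 ?adde0 // => -[|i] //= _ _.
by rewrite f0.
Qed.

Lemma V_step sg x h : is_strategy legal sg -> last_state x h \notin T ->
  V sg x h = \sum_(a : A) \sum_(s : S)
     (sg x h a * P (last_state x h) a s)%:E * V sg x (rcons h (a, s)).
Proof.
move=> hs hT.
rewrite /V nneseries_recl //; last by move=> k _; rewrite lee_fin plen_ge0.
rewrite plen0 (negbTE hT) add0e -nneseries_addn; last by move=> i; rewrite lee_fin plen_ge0.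
under eq_eseriesr do rewrite addn1 plen_S hT mul1r -sumEFin.
rewrite nneseries_sum; last first.
  by move=> a j _; rewrite lee_fin; apply: sumr_ge0 => s _; rewrite mulr_ge0 ?step_ge0 ?plen_ge0.
apply: eq_bigr => a _.
under eq_eseriesr do rewrite -sumEFin.
rewrite nneseries_sum; last first.
  by move=> s j _; rewrite lee_fin mulr_ge0 ?step_ge0 ?plen_ge0.
apply: eq_bigr => s _.
under eq_eseriesr do rewrite EFinM.
by rewrite nneseriesZl // => i _; rewrite lee_fin plen_ge0.
Qed.

Lemma pr_reachE (tau : strat R S A) y : pr_reach P T tau y = V tau y [::].
Proof. by []. Qed.

Lemma pprob_shift (rho tau : strat R S A) x y h :
  (forall h', rho x (h ++ h') = tau y h') -> last_state x h = y ->
  forall w h', pprob P rho x (h ++ h') w = pprob P tau y h' w.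
Proof.
move=> E L; elim=> [|[a s] w IH] h' //=.
by rewrite E last_state_cat L rcons_cat IH.
Qed.

Lemma V_shift (rho tau : strat R S A) x y h :
  (forall h', rho x (h ++ h') = tau y h') -> last_state x h = y ->
  V rho x h = pr_reach P T tau y.
Proof.
move=> E L; rewrite pr_reachE /V; apply: eq_eseriesr => r _; congr EFin.
rewrite /plen L; apply: eq_bigr => w _.
by have := pprob_shift E L w [::]; rewrite cats0.
Qed.

Variable tau0 : strat R S A.
Hypothesis htau0 : is_strategy legal tau0.

Lemma pr_reach_le (sg : strat R S A) s : is_strategy legal sg ->
  pr_reach P T sg s <= ValE legal P T s.
Proof. by move=> hs; apply: ereal_sup_ubound; exists sg. Qed.

Lemma ValE_le1 s : ValE legal P T s <= 1.
Proof. by apply/ereal_supP => y [sg hs <-]; rewrite pr_reachE V_le1. Qed.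

Lemma ValE_ge0 s : 0 <= ValE legal P T s.
Proof. by apply: le_trans (pr_reach_le s htau0); rewrite pr_reachE V_ge0. Qed.

Lemma ValE_fin s : ValE legal P T s = (Val legal P T s)%:E.
Proof.
rewrite /Val fineK // ge0_fin_numE ?ValE_ge0 //.
by apply: (le_lt_trans (ValE_le1 s)); rewrite ltry.
Qed.

Lemma Val_ge0 s : (0 <= Val legal P T s)%R.
Proof. by rewrite -lee_fin -ValE_fin ValE_ge0. Qed.

Lemma Val_le1 s : (Val legal P T s <= 1)%R.
Proof. by rewrite -lee_fin -ValE_fin ValE_le1. Qed.

Lemma Val_T t : t \in T -> Val legal P T t = 1%R.
Proof.
move=> tT; apply/eqP; rewrite eq_le Val_le1 /= -lee_fin -ValE_fin.
have := pr_reach_le t htau0; rewrite pr_reachE V_T //.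
Qed.

Definition rho_st (s : S) (a : A) (f : S -> strat R S A) : strat R S A :=
  fun x h b => if x == s then
    (match h with [::] => ((b == a)%:R)%R | (_, s1) :: h' => f s1 s1 h' b end)
  else tau0 x h b.

Lemma rho_strategy s a f : legal s a -> (forall s', is_strategy legal (f s')) ->
  is_strategy legal (rho_st s a f).
Proof.
move=> la hf x h; rewrite /rho_st; case: eqP => [->|_]; last exact: htau0.
case: h => [|[b0 s1] h'].
  split => [b|| b]; first by rewrite ler0n.
    by rewrite (bigD1 a) //= eqxx big1 ?addr0 // => b /negbTE ->.
  by case: eqP => [-> //|_]; rewrite ltxx.
have [g0 g1 gl] := hf s1 s1 h'; split => //.
Qed.

Lemma bellman s a : legal s a ->
  (\sum_(s' : S) P s a s' * Val legal P T s' <= Val legal P T s)%R.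
Proof.
move=> la; have [P0 P1] := hmdp la.
case: (boolP (s \in T)) => sT.
  rewrite Val_T //; apply: (@le_trans _ _ (\sum_(s' : S) P s a s' * 1)%R).
    by apply: ler_sum => s' _; rewrite ler_wpM2l ?Val_le1.
  by under eq_bigr do rewrite mulr1; rewrite P1.
apply/ler_addgt0Pr => e e0.
have : forall s' : S, exists tau : strat R S A, is_strategy legal tau /\
    (((Val legal P T s' - e)%R)%:E < pr_reach P T tau s').
  move=> s'.
  have fn : ValE legal P T s' \is a fin_num by rewrite ValE_fin.
  have [y [tau ht <-] hy] := ub_ereal_sup_adherent e0 fn.
  by exists tau; split => //; rewrite EFinB -ValE_fin.
case/choice => f hf.
have hrs := rho_strategy la (fun s' => (hf s').1).
have := pr_reach_le s hrs; rewrite pr_reachE V_step //.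
have E : forall b s', V (rho_st s a f) s [:: (b, s')] = pr_reach P T (f s') s'.
  by move=> b s'; apply: V_shift => // h'; rewrite /rho_st eqxx.
pose q s' := fine (pr_reach P T (f s') s').
have hq : forall s', pr_reach P T (f s') s' = (q s')%:E.
  by move=> s'; rewrite pr_reachE [LHS](V_fin _ _ (hf s').1).
have -> : \sum_(b : A) \sum_(s' : S)
     (rho_st s a f s [::] b * P (last_state s (@nil (A*S))) b s')%:E *
        V (rho_st s a f) s (rcons [::] (b, s')) = (\sum_(s' : S) P s a s' * q s')%:E.
  rewrite (bigD1 a) //= [X in (_ + X)%E]big1 ?adde0; last first.
    move=> b nba; apply: big1 => s' _.
    by rewrite /rho_st eqxx (negbTE nba) mul0r mul0e.
  rewrite -sumEFin; apply: eq_bigr => s' _.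
  by rewrite /rho_st eqxx E hq eqxx mul1r -EFinM.
rewrite ValE_fin lee_fin => H.
have H2 : (\sum_(s' : S) P s a s' * (Val legal P T s' - e) <= \sum_(s' : S) P s a s' * q s')%R.
  apply: ler_sum => s' _; rewrite ler_wpM2l // ltW //.
  by have := (hf s').2; rewrite hq lte_fin.
have H3 : (\sum_(s' : S) P s a s' * (Val legal P T s' - e) =
   \sum_(s' : S) P s a s' * Val legal P T s' - e)%R.
  under eq_bigr do rewrite mulrBr.
  by rewrite sumrB -big_distrl /= P1 mul1r.
by move: H2; rewrite H3 => H2; rewrite -lerBlDr; apply: le_trans H2 H.
Qed.

Variables (sigma : strat R S A) (s0 : S).
Hypothesis hsig : is_strategy legal sigma.

Definition Inv h := V sigma s0 h = (Val legal P T (last_state s0 h))%:E.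

Lemma Vshift_le h : V sigma s0 h <= (Val legal P T (last_state s0 h))%:E.
Proof.
pose sh : strat R S A := fun x h' =>
  if x == last_state s0 h then sigma s0 (h ++ h') else tau0 x h'.
have hsh : is_strategy legal sh.
  move=> x h'; rewrite /sh; case: eqP => [->|_]; last exact: htau0.
  by have [g0 g1 gl] := hsig s0 (h ++ h'); split => // b /gl; rewrite last_state_cat.
rewrite (@V_shift sigma sh s0 (last_state s0 h) h) //; last by move=> h'; rewrite /sh eqxx.
by rewrite -ValE_fin pr_reach_le.
Qed.

Lemma step h a s' : Inv h -> last_state s0 h \notin T -> (0 < sigma s0 h a)%R ->
  (0 < P (last_state s0 h) a s')%R ->
  Opt legal P T (last_state s0 h) a /\ Inv (rcons h (a, s')).
Proof.
move=> hI hT sa0 Pa0.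
have [g0 g1 gl] := hsig s0 h.
set x := last_state s0 h in hI hT Pa0 gl *.
pose vr h' := fine (V sigma s0 h').
pose c b t := (sigma s0 h b * P x b t)%R.
have hV : (Val legal P T) x = (\sum_(b : A) \sum_(t : S) c b t * vr (rcons h (b, t)))%R.
  apply: EFin_inj; rewrite -hI V_step // -sumEFin; apply: eq_bigr => b _.
  rewrite -sumEFin; apply: eq_bigr => t _.
  by rewrite [RHS]EFinM -(V_fin _ _ hsig) /c EFinM.
have hle : forall b t, (vr (rcons h (b, t)) <= (Val legal P T) t)%R.
  move=> b t; rewrite -lee_fin /vr -(V_fin _ _ hsig).
  by have := Vshift_le (rcons h (b, t)); rewrite last_state_rcons.
have c0 : forall b t, (0 <= c b t)%R by move=> b t; apply: step_ge0.
pose D1 := (\sum_(b : A) \sum_(t : S) c b t * ((Val legal P T) t - vr (rcons h (b, t))))%R.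
pose D2 := (\sum_(b : A) sigma s0 h b * ((Val legal P T) x - \sum_(t : S) P x b t * (Val legal P T) t))%R.
have D1ge : forall b, (0 <= \sum_(t : S) c b t * ((Val legal P T) t - vr (rcons h (b, t))))%R.
  by move=> b; apply: sumr_ge0 => t _; rewrite mulr_ge0 // subr_ge0.
have D2ge : forall b, (0 <= sigma s0 h b * ((Val legal P T) x - \sum_(t : S) P x b t * (Val legal P T) t))%R.
  move=> b; have := g0 b; rewrite le0r => /orP [/eqP->|hb]; first by rewrite mul0r.
  by rewrite mulr_ge0 ?(ltW hb) // subr_ge0 bellman // gl.
have hD : (D1 + D2 = 0)%R.
  have -> : D1 = (\sum_(b : A) \sum_(t : S) c b t * (Val legal P T) t - (Val legal P T) x)%R.
    rewrite hV /D1 -sumrB; apply: eq_bigr => b _.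
    by rewrite -sumrB; apply: eq_bigr => t _; rewrite mulrBr.
  have -> : D2 = ((Val legal P T) x - \sum_(b : A) \sum_(t : S) c b t * (Val legal P T) t)%R.
    rewrite /D2; under eq_bigr do rewrite mulrBr.
    rewrite sumrB -big_distrl /= g1 mul1r.
    have -> : (\sum_(b : A) sigma s0 h b * \sum_(t : S) P x b t * Val legal P T t =
       \sum_(b : A) \sum_(t : S) c b t * Val legal P T t)%R; last by [].
    by apply: eq_bigr => b _; rewrite big_distrr /=; apply: eq_bigr => t _; rewrite mulrA.
  lra.
have D1s : (0 <= D1)%R by apply: sumr_ge0 => b _.
have D2s : (0 <= D2)%R by apply: sumr_ge0 => b _.
have D10 : D1 = 0%R by lra.
have D20 : D2 = 0%R by lra.
split.
  split; first exact: gl.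
  move/eqP: D20; rewrite psumr_eq0 ?(fun b _ => D2ge b) // => /allP /(_ a).
  rewrite mem_index_enum => /(_ isT) /eqP /eqP; rewrite mulf_eq0 gt_eqF //=.
  by rewrite subr_eq0 => /eqP.
move/eqP: D10; rewrite psumr_eq0 ?(fun b _ => D1ge b) // => /allP /(_ a).
rewrite mem_index_enum => /(_ isT) /eqP.
move/eqP; rewrite psumr_eq0 => [|t _]; last by rewrite mulr_ge0 // subr_ge0.
move=> /allP /(_ s'); rewrite mem_index_enum => /(_ isT) /eqP.
move=> /eqP; rewrite mulf_eq0 /c gt_eqF ?mulr_gt0 //= subr_eq0 => /eqP hv.
rewrite /Inv /last_state map_rcons last_rcons /= (V_fin _ _ hsig).
by rewrite -/(vr _) -hv.
Qed.

Lemma path_eq w h : Inv h -> first_hit T (last_state s0 h) w ->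
  (pprob (P' legal P T) sigma s0 h w * Val legal P T (last_state s0 h)
   = pprob P sigma s0 h w)%R.
Proof.
elim: w h => [|[a s'] w IH] h hI.
  by rewrite first_hit_nil => hT /=; rewrite Val_T // mul1r.
rewrite first_hit_cons /= => /andP [hT hf].
have [g0 _ gl] := hsig s0 h.
set x := last_state s0 h in hI hT hf gl *.
have hx' : last_state s0 (rcons h (a, s')) = s' by rewrite /last_state map_rcons last_rcons.
have := g0 a; rewrite le0r => /orP [/eqP E|sa]; first by rewrite E !mul0r.
have lg := gl a sa; have := (hmdp lg).1 s'; rewrite le0r => /orP [/eqP E|Pa].
  by rewrite /P'; case: ifP => _; rewrite E ?mul0r ?mulr0 ?mul0r.
have [hO hI'] := step hI hT sa Pa.
have IH' := IH _ hI'; rewrite hx' in IH'; have {IH}IH' := IH' hf.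
have := Val_ge0 x; rewrite le0r => /orP [/eqP V0|Vp].
  have : (P x a s' * Val legal P T s' = 0)%R.
    have := hO.2; rewrite V0 => /esym/eqP; rewrite psumr_eq0 => [|t _].
      by move=> /allP /(_ s'); rewrite mem_index_enum => /(_ isT) /eqP.
    by rewrite mulr_ge0 // ?Val_ge0 // (hmdp lg).1.
  move/eqP; rewrite mulf_eq0 gt_eqF //= => /eqP Vs0.
  by rewrite -IH' Vs0 V0 !mulr0.
have -> : P' legal P T x a s' = (P x a s' * Val legal P T s' / Val legal P T x)%R.
  by rewrite /P' /legal' Vp /=; case: asboolP.
rewrite -IH'; field; exact: lt0r_neq0.
Qed.

End Aux.

Theorem lemma5 (R : realType) (S A : finType)
  (legal : S -> A -> bool) (P : S -> A -> S -> R) (T : {set S})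
  (hmdp : is_mdp legal P)
  (hsink : forall t a, t \in T -> legal t a -> P t a t = 1)
  (s0 : S) (hs0 : 0 < Val legal P T s0)
  (sigma : strat R S A) (hsigma : optimal legal P T sigma s0) :
  exp_len' legal P T sigma s0 = exp_len_cond P T sigma s0.
Proof.
have [hs hopt] := hsigma.
set v := Val legal P T s0.
have hE : ValE legal P T s0 = v%:E := ValE_fin T hmdp hs s0.
have hI0 : Inv legal P T sigma s0 [::] by rewrite /Inv -pr_reachE hopt hE.
have hlen : forall r, pr_len (P' legal P T) T sigma s0 r = pr_len P T sigma s0 r / v.
  move=> r; apply: (mulIf (lt0r_neq0 hs0)); rewrite divfK ?(lt0r_neq0 hs0) //.
  rewrite /pr_len big_distrl; apply: eq_bigr => w hw.
  exact: (path_eq hmdp hs hs hI0 hw).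
have pl0 : forall r, 0 <= pr_len P T sigma s0 r by move=> r; exact: (plen_ge0 T hmdp s0 [::] r hs).
have hreach : pr_reach (P' legal P T) T sigma s0 = 1%E.
  rewrite /pr_reach.
  under eq_eseriesr do rewrite hlen (mulrC _ v^-1) EFinM.
  rewrite nneseriesZl; last by move=> i _; rewrite lee_fin.
  have -> : (\sum_(0 <= i <oo) (pr_len P T sigma s0 i)%:E)%E = pr_reach P T sigma s0 by [].
  by rewrite hopt hE -EFinM mulVf //; exact: lt0r_neq0.
rewrite /exp_len' /exp_len_cond hreach ltxx adde0 hopt hE /=.
under eq_eseriesr do rewrite hlen mulrA (mulrC _ v^-1) EFinM.
rewrite nneseriesZl; first by rewrite [RHS]muleC.
move=> i _.
by rewrite lee_fin mulr_ge0.
Qed.
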